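(* Let $S\subset\{2,\dots,p\}$ with cardinality ${\rm s}$, let $\gamma^S_S:=\Sigma_{S,S}^{-1}\mathbb{E}\mathbf{x}_S^T\mathbf{x}_{-1}\gamma^0$ be the coefficient vector of the projection of $\mathbf{x}_{-1}\gamma^0$ on $\mathbf{x}_S$, let $\gamma^S\in\mathbb{R}^{p-1}$ be $\gamma^S_S$ completed with zeroes outside $S$, and let $v^S:=\Sigma_{-1,-1}(\gamma^0-\gamma^S)$ with $v^S_{-S}$ its subvector of entries indexed by $\{2,\dots,p\}\setminus S$. Then $$\|v^S_{-S}\|_\infty\le\big\vert\!\big\vert\!\big\vert\Sigma_{-S,-S}-\Sigma_{-S,S}\Sigma_{S,S}^{-1}\Sigma_{S,-S}\big\vert\!\big\vert\!\big\vert_1\,\|\gamma^0_{-S}\|_\infty.$$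
   Context: $\mathbf{x}=(\mathbf{x}_1,\dots,\mathbf{x}_p)$ is a zero-mean Gaussian row vector with nonsingular covariance $\Sigma$; $\mathbf{x}_{-1}=(\mathbf{x}_2,\dots,\mathbf{x}_p)$, $\Sigma_{-1,-1}=\mathbb{E}\mathbf{x}_{-1}^T\mathbf{x}_{-1}$, $\gamma^0:=\Sigma_{-1,-1}^{-1}\mathbb{E}\mathbf{x}_{-1}^T\mathbf{x}_1\in\mathbb{R}^{p-1}$, with entries indexed by $\{2,\dots,p\}$. For $S\subset\{2,\dots,p\}$, $-S:=\{2,\dots,p\}\setminus S$, $\mathbf{x}_S=\{\mathbf{x}_j\}_{j\in S}$, $\mathbf{x}_{-S}=\{\mathbf{x}_j\}_{j\in -S}$, $\Sigma_{S,S}=\mathbb{E}\mathbf{x}_S^T\mathbf{x}_S$, $\Sigma_{-S,-S}=\mathbb{E}\mathbf{x}_{-S}^T\mathbf{x}_{-S}$, $\Sigma_{S,-S}=\mathbb{E}\mathbf{x}_S^T\mathbf{x}_{-S}=\Sigma_{-S,S}^T$; $\gamma^0_{-S}$ is the subvector of $\gamma^0$ indexed by $-S$. For a matrix $A=(a_{j,k})$, $\vert\!\vert\!\vert A\vert\!\vert\!\vert_1:=\max_j\sum_k|a_{j,k}|$. *)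

(* Defs.v *)
From HB Require Import structures.
From mathcomp Require Import all_boot all_order all_algebra.
Set Implicit Arguments. Unset Strict Implicit. Unset Printing Implicit Defensive.
Import Order.TTheory GRing.Theory Num.Theory.
Local Open Scope ring_scope.

(* Conventions: p = n.+1 variables x_1..x_p are indexed by 'I_(n.+1), with
   x_1 <-> ord0 and x_{k+1} (k in 1..n) <-> lift ord0 (k-1).  Thus the index
   set {2,...,p} is 'I_n (via lift ord0), and S is a {set 'I_n}.
   Sigma : 'M_(n.+1) is the covariance matrix E x^T x. *)

Section Defs.
Variable R : realFieldType.
Variable n : nat.

Definition Sig11 (Sigma : 'M[R]_(n.+1)) : 'M[R]_n :=
  \matrix_(i, j) Sigma (lift ord0 i) (lift ord0 j).

Definition sig1 (Sigma : 'M[R]_(n.+1)) : 'cV[R]_n :=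
  \col_i Sigma (lift ord0 i) ord0.

Definition gamma0 (Sigma : 'M[R]_(n.+1)) : 'cV[R]_n :=
  invmx (Sig11 Sigma) *m sig1 Sigma.

Definition idx (S : {set 'I_n}) : 'I_#|S| -> 'I_n := enum_val.

Definition Sblock (Sigma : 'M[R]_(n.+1)) (A B : {set 'I_n}) : 'M[R]_(#|A|, #|B|) :=
  mxsub (@idx A) (@idx B) (Sig11 Sigma).

Definition SrowS (Sigma : 'M[R]_(n.+1)) (S : {set 'I_n}) : 'M[R]_(#|S|, n) :=
  rowsub (@idx S) (Sig11 Sigma).

Definition subv (A : {set 'I_n}) (v : 'cV[R]_n) : 'cV[R]_#|A| := rowsub (@idx A) v.

Definition extend0 (S : {set 'I_n}) (w : 'cV[R]_#|S|) : 'cV[R]_n :=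
  \col_i \sum_(k < #|S| | idx k == i) w k 0.

Definition gammaSS (Sigma : 'M[R]_(n.+1)) (S : {set 'I_n}) : 'cV[R]_#|S| :=
  invmx (Sblock Sigma S S) *m (SrowS Sigma S *m gamma0 Sigma).

Definition gammaS (Sigma : 'M[R]_(n.+1)) (S : {set 'I_n}) : 'cV[R]_n :=
  extend0 (gammaSS Sigma S).

Definition vS (Sigma : 'M[R]_(n.+1)) (S : {set 'I_n}) : 'cV[R]_n :=
  Sig11 Sigma *m (gamma0 Sigma - gammaS Sigma S).

End Defs.

Definition supnorm (R : realFieldType) (m : nat) (v : 'cV[R]_m) : R :=
  \big[Num.max/0]_(i < m) `|v i 0|.

Definition mxnorm1 (R : realFieldType) (m k : nat) (A : 'M[R]_(m, k)) : R :=
  \big[Num.max/0]_(j < m) \sum_(l < k) `|A j l|.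

(* nonsingular covariance matrix: symmetric positive definite *)
Definition posdef (R : realFieldType) (m : nat) (A : 'M[R]_m) : Prop :=
  A^T = A /\ forall u : 'rV[R]_m, u != 0 -> 0 < (u *m A *m u^T) 0 0.

(* Main.v *)
Require Import Defs.
From HB Require Import structures.
From mathcomp Require Import all_boot all_order all_algebra.
Import Order.TTheory GRing.Theory Num.Theory.
Local Open Scope ring_scope.

Section Aux.
Variable R : realFieldType.
Variable n : nat.

Lemma sum_split (F : 'I_n -> R) (T : {set 'I_n}) :
  \sum_l F l = \sum_(k < #|T|) F (@idx n T k) + \sum_(k < #|~: T|) F (@idx n (~: T) k).
Proof.
rewrite (bigID (fun l => l \in T)) /=; congr (_ + _).
  by rewrite -big_enum_val.
rewrite -big_enum_val; apply: eq_bigl => l; by rewrite in_setC.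
Qed.

Lemma mul_split m (M : 'M[R]_(m, n)) (v : 'cV[R]_n) (T : {set 'I_n}) :
  M *m v = colsub (@idx n T) M *m subv T v + colsub (@idx n (~: T)) M *m subv (~: T) v.
Proof.
apply/matrixP => a b; rewrite !mxE (sum_split _ T); congr (_ + _);
  by apply: eq_bigr => k _; rewrite !mxE.
Qed.

Lemma mul_ext m (M : 'M[R]_(m, n)) (T : {set 'I_n}) (w : 'cV[R]_#|T|) :
  M *m extend0 w = colsub (@idx n T) M *m w.
Proof.
apply/matrixP => a b; rewrite !mxE.
under eq_bigr => l _ do rewrite !mxE big_distrr /=.
rewrite (exchange_big_dep xpredT) //=.
apply: eq_bigr => k _; rewrite !mxE.
rewrite (big_pred1 (idx k)) ?ord1 // => l; by rewrite eq_sym.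
Qed.

Lemma rowsub_mul m p (f : 'I_m -> 'I_n) (A : 'M[R]_(n, p)) (v : 'cV[R]_p) :
  rowsub f (A *m v) = rowsub f A *m v.
Proof. by apply/matrixP => a b; rewrite !mxE; apply: eq_bigr => k _; rewrite !mxE. Qed.

Lemma supnorm_ge0 m (v : 'cV[R]_m) : 0 <= supnorm v.
Proof. exact: bigmax_ge_id. Qed.

Lemma supnorm_mul m k (M : 'M[R]_(m, k)) (h : 'cV[R]_k) :
  supnorm (M *m h) <= mxnorm1 M * supnorm h.
Proof.
have n1 : 0 <= mxnorm1 M by exact: bigmax_ge_id.
apply: bigmax_le => [|i _]; first by rewrite mulr_ge0 // supnorm_ge0.
rewrite mxE; apply: (le_trans (ler_norm_sum _ _ _)).
apply: (@le_trans _ _ (\sum_l `|M i l| * supnorm h)).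
  apply: ler_sum => l _; rewrite normrM ler_wpM2l //.
  rewrite /supnorm; exact: (le_bigmax _ (fun i => `|h i 0|) l).
rewrite -mulr_suml ler_wpM2r ?supnorm_ge0 //.
rewrite /mxnorm1; exact: (le_bigmax _ (fun j => \sum_(l < k) `|M j l|) i).
Qed.

End Aux.

Lemma SSunit (R : realFieldType) (n : nat) (Sigma : 'M[R]_(n.+1)) (S : {set 'I_n}) :
  posdef Sigma -> Sblock Sigma S S \in unitmx.
Proof.
move=> [_ Hpd]; rewrite unitmxE unitfE; apply/negP => /det0P [u u0 uA].
pose E : 'M[R]_(#|S|, n.+1) := \matrix_(k, i) (i == lift ord0 (@idx n S k))%:R.
have EE : E *m E^T = 1%:M.
  apply/matrixP => a b; rewrite !mxE.
  rewrite (bigD1 (lift ord0 (@idx n S a))) //= !mxE eqxx mul1r big1 ?addr0.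
    by rewrite (inj_eq (@lift_inj _ ord0)) (inj_eq enum_val_inj) eq_sym.
  by move=> i /negbTE H; rewrite !mxE H mul0r.
have AE : Sblock Sigma S S = E *m Sigma *m E^T.
  apply/matrixP => a b; rewrite !mxE.
  rewrite (bigD1 (lift ord0 (@idx n S b))) //= big1 ?addr0; last first.
    by move=> j /negbTE H; rewrite !mxE H mulr0.
  rewrite !mxE eqxx mulr1 (bigD1 (lift ord0 (@idx n S a))) //= big1 ?addr0; last first.
    by move=> j /negbTE H; rewrite !mxE H mul0r.
  by rewrite !mxE eqxx mul1r.
pose w := u *m E.
have w0 : w != 0.
  apply: contraNneq u0 => H; by rewrite -[u]mulmx1 -EE mulmxA -/w H mul0mx.
have := Hpd w w0.
have -> : w *m Sigma *m w^T = u *m Sblock Sigma S S *m u^T.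
  by rewrite AE /w trmx_mul !mulmxA.
by rewrite uA mul0mx mxE ltxx.
Qed.

Lemma colsub_rowsub (R : realFieldType) m1 m2 p q (f : 'I_m1 -> 'I_p) (h : 'I_m2 -> 'I_q)
  (M : 'M[R]_(p, q)) : colsub h (rowsub f M) = mxsub f h M.
Proof. by apply/matrixP => i j; rewrite !mxE. Qed.

Theorem lemma3p3 (R : realFieldType) (n : nat) (Sigma : 'M[R]_(n.+1))
    (S : {set 'I_n}) :
  posdef Sigma ->
  supnorm (subv (~: S) (vS Sigma S)) <=
    mxnorm1 (Sblock Sigma (~: S) (~: S)
             - Sblock Sigma (~: S) S *m invmx (Sblock Sigma S S)
                 *m Sblock Sigma S (~: S))
    * supnorm (subv (~: S) (gamma0 Sigma)).
Proof.
move=> Hpd; have Au : Sblock Sigma S S \in unitmx by exact: SSunit.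
set A := Sblock Sigma S S; set g := gamma0 Sigma.
set C := Sblock Sigma (~:S) S; set D := Sblock Sigma (~:S) (~:S).
set B := Sblock Sigma S (~:S).
suff -> : subv (~:S) (vS Sigma S) = (D - C *m invmx A *m B) *m subv (~:S) g.
  exact: supnorm_mul.
have HS : SrowS Sigma S *m g = A *m subv S g + B *m subv (~:S) g.
  by rewrite /SrowS (@mul_split _ _ _ _ _ S) !colsub_rowsub.
have Hw : gammaSS Sigma S = subv S g + invmx A *m B *m subv (~:S) g.
  by rewrite /gammaSS -/A -/g HS mulmxDr !mulmxA mulVmx // mul1mx.
rewrite /vS /gammaS {1}/subv rowsub_mul mulmxBr mul_ext (@mul_split _ _ _ _ g S).
rewrite !colsub_rowsub -/C -/D Hw.
by rewrite mulmxDr mulmxBl !mulmxA opprD addrACA subrr add0r.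
Qed.
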